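(* Let $Q$ be a finite commutative A-loop of odd order, and define $x\circ y = \big(x^{-1}\backslash (xy^2)\big)^{1/2}$. A subloop $K$ of $(Q,\circ)$ is a subloop of $Q$ if and only if $K\varphi = K$ for each $\varphi\in \mathrm{Inn}(Q)\cap\langle L_x : x\in K\rangle$.
   Context: A loop is a set with a binary operation and neutral element $1$ in which all left translations $L_x:y\mapsto xy$ and right translations are bijections; $\mathrm{Mlt}(Q)$ is the group they generate and $\mathrm{Inn}(Q)$ the stabilizer of $1$ in it. A commutative A-loop is a commutative loop all of whose inner mappings are automorphisms. $x\backslash y$ is the unique $z$ with $xz=y$, $x^{-1}=x\backslash 1$. In a finite commutative loop of odd order the squaring map is a bijection, and $z^{1/2}$ denotes the unique $w$ with $w^2=z$; $(Q,\circ)$ is then a loop. $\langle L_x : x\in K\rangle$ is the subgroup of $\mathrm{Mlt}(Q)$ generated by the left translations of $Q$ by elements of $K$. *)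

(* Defs.v *)
From mathcomp Require Import all_boot all_order all_fingroup.
Set Implicit Arguments. Unset Strict Implicit. Unset Printing Implicit Defensive.
Local Open Scope group_scope.

Section Loops.
Variable T : finType.
Variable mul : T -> T -> T.
Variable one : T.

Definition is_loop : Prop :=
  (forall x, mul one x = x /\ mul x one = x) /\
  (forall x, bijective (mul x)) /\ (forall x, bijective (fun y => mul y x)).

Definition is_commutative : Prop := forall x y, mul x y = mul y x.

(* translations as permutations (identity if not injective; never happens in a loop) *)
Definition Lperm (x : T) : {perm T} :=
  match injectiveb (mul x) as b return injectiveb (mul x) = b -> {perm T} with
  | true => fun H => perm (injectiveP _ H)
  | false => fun _ => 1
  end erefl.

Definition Rperm (x : T) : {perm T} :=
  match injectiveb (fun y => mul y x) as b
        return injectiveb (fun y => mul y x) = b -> {perm T} with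
  | true => fun H => perm (injectiveP _ H)
  | false => fun _ => 1
  end erefl.

Definition Mlt : {set {perm T}} :=
  <<[set Lperm x | x in T] :|: [set Rperm x | x in T]>>.

Definition Inn : {set {perm T}} := [set p in Mlt | p one == one].

Definition Lgen (K : {set T}) : {set {perm T}} := <<[set Lperm x | x in K]>>.

Definition is_comm_Aloop : Prop :=
  [/\ is_loop, is_commutative &
      forall p, p \in Inn -> forall x y, p (mul x y) = mul (p x) (p y)].

(* x \ y, x^{-1}, z^{1/2} (uniquely determined in the situation of the paper) *)
Definition ldiv (x y : T) : T := odflt y [pick z | mul x z == y].
Definition linv (x : T) : T := ldiv x one.
Definition sqrt (z : T) : T := odflt z [pick w | mul w w == z].

Definition circ (x y : T) : T := sqrt (ldiv (linv x) (mul x (mul y y))).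
End Loops.

Definition is_subloop (T : finType) (m : T -> T -> T) (K : {set T}) : Prop :=
  [/\ K != set0,
      (forall x y, x \in K -> y \in K -> m x y \in K),
      (forall x y z, x \in K -> y \in K -> m x z = y -> z \in K) &
      (forall x y z, x \in K -> y \in K -> m z x = y -> z \in K)].

(* Main.v *)
Require Import Defs.
From mathcomp Require Import all_boot all_order all_fingroup.
Set Implicit Arguments. Unset Strict Implicit. Unset Printing Implicit Defensive.
Local Open Scope group_scope.

Lemma odd_invol (T : finType) (f : T -> T) :
  involutive f -> (forall x, f x != x) ->
  forall n (A : {set T}), #|A| = n -> (forall x, x \in A -> f x \in A) -> ~~ odd n.
Proof.
move=> inv nfix n; elim: n {-2}n (leqnn n) => [|N IH] n Hn A HA cl.
  by move: Hn; rewrite leqn0 => /eqP ->.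
case: (set_0Vmem A) => [A0|[x xA]].
  by rewrite -HA A0 cards0.
pose B := A :\ x :\ f x.
have fxA : f x \in A by apply: cl.
have fxx : f x != x by apply: nfix.
have cB : #|A| = #|B|.+2.
  rewrite /B (cardsD1 x A) xA (cardsD1 (f x) (A :\ x)) !inE fxx fxA.
  by rewrite add1n.
have clB : forall y, y \in B -> f y \in B.
  move=> y; rewrite !inE => /and3P [y1 y2 yA].
  rewrite (cl _ yA) andbT; apply/andP; split.
    by apply: contra y2 => /eqP E; rewrite -[y]inv E inv.
  by apply: contra y1 => /eqP <-; rewrite inv.
have := IH #|B| _ B erefl clB.
rewrite -HA cB /= negbK => ->//.
move: Hn; rewrite -HA cB ltnS; exact: ltnW.
Qed.

Section Loop.
Variable T : finType.
Variable mul : T -> T -> T.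
Variable one : T.
Hypothesis Hl : is_loop mul one.
Hypothesis Hc : is_commutative mul.
Hypothesis HA : forall p, p \in Inn mul one -> forall x y, p (mul x y) = mul (p x) (p y).
Hypothesis Hodd : odd #|T|.

Lemma mul1x x : mul one x = x. Proof. by case: Hl => H _; case: (H x). Qed.
Lemma mulx1 x : mul x one = x. Proof. by case: Hl => H _; case: (H x). Qed.
Lemma injL x : injective (mul x).
Proof. by case: Hl => _ [H _]; apply: bij_inj. Qed.

Lemma Lp x y : Lperm mul x y = mul x y.
Proof.
rewrite /Lperm.
move: (erefl (injectiveb (mul x))).
case: {2 3}(injectiveb (mul x)) => E.
  by rewrite permE.
by move/injectiveP: (@injL x); rewrite E.
Qed.

Lemma ldivK x y : mul x (ldiv mul x y) = y.
Proof.
rewrite /ldiv; case: pickP => [z /eqP//|H].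
case: Hl => _ [/(_ x) [g _ gK] _].
by move: (H (g y)); rewrite gK eqxx.
Qed.

Lemma ldiv_mul x z : ldiv mul x (mul x z) = z.
Proof. by apply: (@injL x); rewrite ldivK. Qed.

Notation inv := (linv mul one).

Lemma mulV x : mul x (inv x) = one. Proof. exact: ldivK. Qed.
Lemma mulVx x : mul (inv x) x = one. Proof. by rewrite Hc mulV. Qed.
Lemma invK x : inv (inv x) = x.
Proof. by rewrite {1}/linv -{2}(mulVx x) ldiv_mul. Qed.

Definition sq x := mul x x.

Lemma sq_surj z : exists y, sq y = z.
Proof.
pose f x := ldiv mul x z.
have finv : involutive f.
  move=> x; rewrite /f; have E : mul (ldiv mul x z) x = z by rewrite Hc ldivK.
  by rewrite -{2}E ldiv_mul.
case: (pickP (fun x => f x == x)) => [x /eqP fx|H].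
  by exists x; rewrite /sq -{2}fx ldivK.
have := @odd_invol T f finv (fun x => negbT (H x)) _ [set: T] erefl.
by rewrite cardsT Hodd; move=> /(_ (fun x _ => in_setT _)).
Qed.

Lemma sqrtK z : sq (sqrt mul z) = z.
Proof.
rewrite /sqrt; case: pickP => [w /eqP//|H].
case: (sq_surj z) => y E; by move: (H y); rewrite /sq in E; rewrite E eqxx.
Qed.

Lemma sqrt_sq y : sqrt mul (sq y) = y.
Proof.
have inj : injective (sqrt mul) by apply: (can_inj sqrtK).
case: (injF_bij inj) => g gK Kg.
by rewrite -(Kg y) sqrtK.
Qed.

Lemma Lp_Mlt x : Lperm mul x \in Mlt mul.
Proof. by apply: mem_gen; rewrite inE; apply/orP; left; apply: imset_f. Qed.

Lemma inInn p : p \in Mlt mul -> p one = one -> p \in Inn mul one.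
Proof. by move=> H1 H2; rewrite inE H1 H2 eqxx. Qed.

Lemma F1 a : mul (inv a) (sq a) = a.
Proof.
pose p := Lperm mul (inv a) * Lperm mul a.
have pE y : p y = mul a (mul (inv a) y) by rewrite permM !Lp.
have pI : p \in Inn mul one.
  by apply: inInn; [rewrite groupM // Lp_Mlt | rewrite pE mulx1 mulV].
have pa : p a = a by rewrite pE mulVx mulx1.
have := HA pI a a; rewrite pa pE => /injL //.
Qed.

Lemma Linv s y : (Lperm mul s)^-1 y = ldiv mul s y.
Proof. by apply: (@injL s); rewrite -Lp permKV ldivK. Qed.

Lemma F2 x : mul x (mul x (sq x)) = sq (sq x).
Proof.
pose p := Lperm mul x * Lperm mul x * (Lperm mul (sq x))^-1.
have pE y : p y = ldiv mul (sq x) (mul x (mul x y)) by rewrite !permM !Lp Linv.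
have pI : p \in Inn mul one.
  apply: inInn; first by rewrite !groupM ?groupV // Lp_Mlt.
  by rewrite pE mulx1 -[mul x x](mulx1 (sq x)) ldiv_mul.
have px : p x = x by rewrite pE /sq Hc ldiv_mul.
have := HA pI x x; rewrite px -/(sq x) pE => E.
by rewrite -(ldivK (sq x) (mul x (mul x (sq x)))) E.
Qed.

Lemma F3 x : mul (inv x) (mul x (mul x (sq x))) = mul x (sq x).
Proof.
pose p := Lperm mul x * Lperm mul (inv x).
have pE y : p y = mul (inv x) (mul x y) by rewrite permM !Lp.
have pI : p \in Inn mul one.
  by apply: inInn; [rewrite groupM // Lp_Mlt | rewrite pE mulx1 mulVx].
have px : p x = x by rewrite pE F1.
by rewrite -pE !HA // px.
Qed.

Lemma circ_xx x : circ mul one x x = sq x.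
Proof.
rewrite /circ -/(sq x) -F3 ldiv_mul F2; exact: sqrt_sq.
Qed.

Lemma circ_inv x : circ mul one x (inv x) = one.
Proof.
rewrite /circ -/(sq (inv x)).
have := F1 (inv x); rewrite invK => ->.
by rewrite -[X in ldiv _ _ X](mulx1 (inv x)) ldiv_mul -{1}(mulx1 one) -/(sq one) sqrt_sq.
Qed.

Lemma circ_1x y : circ mul one one y = y.
Proof.
have i1 : linv mul one one = one.
  by rewrite /linv -[X in ldiv _ _ X](mulx1 one) ldiv_mul.
rewrite /circ i1 mul1x -/(sq y) -[X in ldiv _ _ X](mul1x (sq y)).
by rewrite ldiv_mul sqrt_sq.
Qed.

Lemma circ_sq x y : sq (circ mul one x y) = ldiv mul (inv x) (mul x (sq y)).
Proof. exact: sqrtK. Qed.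

Lemma Lp_Lgen (K : {set T}) x : x \in K -> Lperm mul x \in Lgen mul K.
Proof. by move=> xK; apply: mem_gen; apply: imset_f. Qed.

Lemma img_full (K : {set T}) (f : T -> T) :
  injective f -> (forall k, k \in K -> f k \in K) -> forall k, k \in K -> exists2 j, j \in K & f j = k.
Proof.
move=> inj cl k kK.
have E : f @: K = K.
  apply/eqP; rewrite eqEcard card_imset // leqnn andbT.
  by apply/subsetP => y /imsetP [j jK ->]; apply: cl.
by move: kK; rewrite -{1}E => /imsetP [j jK ->]; exists j.
Qed.

Lemma backward (K : {set T}) :
  is_subloop (circ mul one) K ->
  (forall phi, phi \in Inn mul one :&: Lgen mul K -> phi @: K = K) ->
  is_subloop mul K.
Proof.
move=> [ne cl dl dr] Hphi.
have stab phi k : phi \in Inn mul one :&: Lgen mul K -> k \in K -> phi k \in K.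
  by move=> /Hphi E kK; rewrite -E; apply: imset_f.
have stab' phi k : phi \in Inn mul one :&: Lgen mul K -> k \in K ->
    exists2 j, j \in K & phi j = k.
  by move=> /Hphi E; rewrite -{1}E => /imsetP [j jK ->]; exists j.
have oneK : one \in K.
  case/set0Pn: ne => k kK; exact: (dr k k one kK kK (circ_1x k)).
have invK' x : x \in K -> inv x \in K.
  by move=> xK; apply: (dl x one) => //; apply: circ_inv.
have sqK x : x \in K -> sq x \in K.
  by move=> xK; rewrite -circ_xx; apply: cl.
have sqrtK' k : k \in K -> sqrt mul k \in K.
  move=> kK; have [j jK E] := img_full (can_inj sqrt_sq) sqK kK.
  by rewrite -E sqrt_sq.
have PK x k : x \in K -> k \in K -> ldiv mul (inv x) (mul x k) \in K.
  move=> xK kK; rewrite -(sqrtK k) -circ_sq; apply: sqK; apply: cl => //.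
  exact: sqrtK'.
have LLK x k : x \in K -> k \in K -> mul x (mul x k) \in K.
  move=> xK kK.
  pose p := Lperm mul (inv x) * Lperm mul x.
  have pE y : p y = mul x (mul (inv x) y) by rewrite permM !Lp.
  have pI : p \in Inn mul one :&: Lgen mul K.
    rewrite inE; apply/andP; split.
      by apply: inInn; [rewrite groupM // Lp_Mlt | rewrite pE mulx1 mulV].
    by rewrite groupM // Lp_Lgen // invK'.
  by have := stab p _ pI (PK x k xK kK); rewrite pE ldivK.
have L2K x k : x \in K -> k \in K -> mul (sq x) k \in K.
  move=> xK kK.
  pose p := Lperm mul x * Lperm mul x * (Lperm mul (sq x))^-1.
  have pE y : p y = ldiv mul (sq x) (mul x (mul x y)) by rewrite !permM !Lp Linv.
  have pI : p \in Inn mul one :&: Lgen mul K.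
    rewrite inE; apply/andP; split.
      apply: inInn; first by rewrite !groupM ?groupV // Lp_Mlt.
      by rewrite pE mulx1 -[mul x x](mulx1 (sq x)) ldiv_mul.
    by rewrite !groupM ?groupV // Lp_Lgen // sqK.
  have [j jK] := stab' p k pI kK.
  by rewrite pE => <-; rewrite ldivK; apply: LLK.
have mulK x y : x \in K -> y \in K -> mul x y \in K.
  by move=> xK yK; rewrite -(sqrtK x); apply: L2K => //; apply: sqrtK'.
have divl x y z : x \in K -> y \in K -> mul x z = y -> z \in K.
  move=> xK yK E.
  have [j jK E'] := img_full (@injL x) (fun k kK => mulK x k xK kK) yK.
  by move: E'; rewrite -E => /injL <-.
split => // x y z xK yK; rewrite Hc; exact: divl.
Qed.

Lemma forward (K : {set T}) :
  is_subloop mul K ->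
  (forall phi, phi \in Inn mul one :&: Lgen mul K -> phi @: K = K).
Proof.
move=> [ne cl dl dr] phi /setIP [_ phiG].
have sub : Lgen mul K \subset 'N(K | 'P).
  rewrite gen_subG; apply/subsetP => p /imsetP [x xK ->].
  apply/astabsP => y /=; rewrite apermE Lp.
  apply/idP/idP => [H|]; first exact: (dl x _ y xK H).
  exact: cl.
have E := astabs_setact (subsetP sub _ phiG).
by rewrite -{2}E /setact; apply: eq_imset => y.
Qed.

End Loop.

Theorem lemma3p9 (T : finType) (mul : T -> T -> T) (one : T)
  (HQ : is_comm_Aloop mul one) (Hodd : odd #|T|) (K : {set T})
  (HK : is_subloop (circ mul one) K) :
  is_subloop mul K <->
  (forall phi, phi \in Inn mul one :&: Lgen mul K -> phi @: K = K).
Proof.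
case: HQ => Hl Hc HA; split.
  exact: forward.
exact: backward.
Qed.
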